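(* Fix a joint distribution of $(X,Y,Z)$, where $X$ is a feature vector, $Y\in\{0,1\}$ is the true label and $Z$ is a sensitive attribute taking values in a finite set $\mathcal{G}$ with $|\mathcal{G}|\ge 2$. Suppose that the fairness-accuracy pairs $(\epsilon_1,a_1),(\epsilon_2,a_2),\ldots,(\epsilon_k,a_k)$ are all achievable with respect to demographic parity. Then for any $\beta_1,\ldots,\beta_k\in[0,1]$ with $\sum_{i=1}^k\beta_i=1$, the pair $\left(\sum_{i=1}^{k}\beta_i\epsilon_i,\ \sum_{i=1}^{k}\beta_i a_i\right)$ is also achievable with respect to demographic parity. Consequently, every point of the convex hull of $\{(\epsilon_1,a_1),\ldots,(\epsilon_k,a_k)\}$ is achievable with respect to demographic parity.
   Context: A (possibly randomized) binary classifier is a conditional distribution $\pi(\hat Y\mid X)$ on $\{0,1\}$ given the features $X$ (it does not take $Z$ as input); the prediction $\hat Y$ is drawn from $\pi(\cdot\mid X)$, so that $(X,Y,Z,\hat Y)$ has a joint distribution in which $\hat Y$ is conditionally independent of $(Y,Z)$ given $X$. Its accuracy is $\mathrm{Acc}(\pi)=\Pr(\hat Y=Y)$. Write $\pi(1\mid Z=i)=\Pr(\hat Y=1\mid Z=i)$. The demographic parity bias of $\pi$ is $\Delta_{DP}(\pi)=\sum_{i\neq j,\ i,j\in\mathcal{G}}|\pi(1\mid Z=i)-\pi(1\mid Z=j)|$. A pair $(\epsilon,a)$ of real numbers is achievable with respect to demographic parity if there exists a classifier $\pi$ with $\mathrm{Acc}(\pi)\ge a$ and $\Delta_{DP}(\pi)\le\epsilon$.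 *)

(* Defs.v *)
From HB Require Import structures.
From mathcomp Require Import all_boot all_order all_algebra.
From mathcomp Require Import all_classical all_reals all_analysis.

Set Implicit Arguments.
Unset Strict Implicit.
Unset Printing Implicit Defensive.
Import Order.TTheory GRing.Theory Num.Theory.
Import numFieldNormedType.Exports.

Local Open Scope classical_set_scope.
Local Open Scope ring_scope.

(* A (possibly randomized) binary classifier pi(. | X) is given by the
   measurable map  f : TX -> R,  f x = pi(1 | X = x) in [0,1];
   Yhat is drawn from pi(. | X) independently of (Y, Z) given X. *)

Section Fairness.
Context {dO dX : measure_display} {Omega : measurableType dO}
  {TX : measurableType dX} {R : realType} {G : finType}.
Variables (P : probability Omega R) (X : Omega -> TX) (Y : Omega -> bool)
  (Z : Omega -> G).

Definition is_classifier (f : TX -> R) : Prop :=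
  measurable_fun setT f /\ (forall x, 0 <= f x <= 1).

(* Acc(pi) = Pr(Yhat = Y) = E[ 1{Y=1} pi(1|X) + 1{Y=0} pi(0|X) ] *)
Definition accuracy (f : TX -> R) : R :=
  Rintegral P setT (fun w => if Y w then f (X w) else 1 - f (X w)).

Definition pred1_given (f : TX -> R) (i : G) : R :=
  Rintegral P [set w | Z w = i] (fun w => f (X w)) /
  fine (P [set w | Z w = i]).

Definition DP_bias (f : TX -> R) : R :=
  \sum_(i : G) \sum_(j : G | j != i) `|pred1_given f i - pred1_given f j|.

Definition achievable_DP (eps a : R) : Prop :=
  exists f, is_classifier f /\ a <= accuracy f /\ DP_bias f <= eps.

End Fairness.

(* Main.v *)
Require Import Defs.
From HB Require Import structures.
From mathcomp Require Import all_boot all_order all_algebra.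
From mathcomp Require Import all_classical all_reals all_analysis.
Import Order.TTheory GRing.Theory Num.Theory.
Local Open Scope classical_set_scope.
Local Open Scope ring_scope.

Section H.
Context {dO : measure_display} {Omega : measurableType dO} {R : realType}.
Variable (P : probability Omega R).

Lemma int01 (A : set Omega) (mA : measurable A) (h : Omega -> R) :
  measurable_fun setT h -> (forall w, 0 <= h w <= 1) -> P.-integrable A (EFin \o h).
Proof.
move=> mh h01; apply: measurable_bounded_integrable => //.
- by apply: (le_lt_trans (probability_le1 P mA)); rewrite ltry.
- exact: measurable_funS mh.
- exists 1; split; first by rewrite num_real.
  move=> M hM x Ax; have /andP[h0 h1] := h01 x.
  by rewrite /= ger0_norm // (le_trans h1) // ltW.
Qed.

Lemma Rint_sum (D : set Omega) (mD : measurable D) I (s : seq I) (c : I -> R)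
  (h : I -> Omega -> R) : (forall i, P.-integrable D (EFin \o h i)) ->
  Rintegral P D (fun x => \sum_(i <- s) c i * h i x) =
  \sum_(i <- s) c i * Rintegral P D (h i).
Proof.
move=> hi; elim: s => [|j s IH].
  rewrite big_nil; under eq_Rintegral do rewrite big_nil.
  by rewrite Rintegral_cst // mul0r.
rewrite big_cons -IH -(RintegralZl _ mD (hi j)).
rewrite -(RintegralD mD).

- by apply: eq_Rintegral => x _; rewrite big_cons.
- have -> : (EFin \o (fun x => c j * h j x)) = (fun x => ((c j)%:E * (EFin \o h j) x)%E) by [].
  exact: integrableZl.
- have -> : (EFin \o (fun x => \sum_(i <- s) c i * h i x)) =
     (fun x => \sum_(i <- s) (c i)%:E * (EFin \o h i) x)%E.
    by apply/funext => x /=; rewrite -sumEFin.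
  apply: (integrable_sum mD) => i _; exact: integrableZl.
Qed.
End H.

Theorem proposition1 (dO dX : measure_display) (Omega : measurableType dO)
  (TX : measurableType dX) (R : realType) (G : finType)
  (P : probability Omega R) (X : Omega -> TX) (Y : Omega -> bool)
  (Z : Omega -> G)
  (mX : measurable_fun setT X)
  (mY : measurable [set w | Y w])
  (mZ : forall i : G, measurable [set w | Z w = i])
  (hG : (1 < #|G|)%N)
  (hZpos : forall i : G, (0 < P [set w | Z w = i])%E)
  (k : nat) (eps a beta : 'I_k -> R)
  (hach : forall i, achievable_DP P X Y Z (eps i) (a i))
  (hbeta : forall i, 0 <= beta i <= 1)
  (hsum : \sum_(i < k) beta i = 1) :
  achievable_DP P X Y Z (\sum_(i < k) beta i * eps i)
                        (\sum_(i < k) beta i * a i).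
Proof.
have [F hF] := choice hach.
have b0 i : 0 <= beta i by case/andP: (hbeta i).
have mF i : measurable_fun setT (F i) by case: (hF i) => [[]].
have F01 i x : 0 <= F i x <= 1 by case: (hF i) => [[_ ]].
have mY' : measurable_fun setT Y.
  apply: (measurable_fun_bool true); rewrite setTI.
  by have -> : Y @^-1` [set true] = [set w | Y w] by apply/funext => w /=; apply/propext; split => [->|].
pose g (h : TX -> R) w := if Y w then h (X w) else 1 - h (X w).
have mFX i : measurable_fun setT (fun w => F i (X w)).
  exact: (measurableT_comp (mF i) mX).
have ig i : P.-integrable setT (EFin \o g (F i)).
  apply: int01 => //.
    apply: measurable_fun_ifT => //; apply: measurable_realfun.measurable_funB => //.
  move=> w; rewrite /g; case: (Y w); have /andP[h0 h1] := F01 i (X w) => //.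
  by rewrite subr_ge0 h1 /= lerBlDr lerDl.
have iF i j : P.-integrable [set w | Z w = j] (EFin \o (fun w => F i (X w))).
  exact: int01.
pose f x := \sum_(i < k) beta i * F i x.
exists f; split; [|split].
- split.
    apply: measurable_sum => i; apply: measurable_realfun.measurable_funM => //.
  move=> x; apply/andP; split.
    by apply: sumr_ge0 => i _; apply: mulr_ge0 => //; case/andP: (F01 i x).
  rewrite -hsum; apply: ler_sum => i _.
  by rewrite -[X in _ <= X]mulr1 ler_wpM2l //; case/andP: (F01 i x).
- have -> : accuracy P X Y f = \sum_(i < k) beta i * accuracy P X Y (F i).
    rewrite /accuracy -(@Rint_sum _ _ _ P setT measurableT _ _ beta (fun i => g (F i)) ig).
    apply: eq_Rintegral => w _; rewrite /g /f; case: (Y w) => //.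
    rewrite -[X in X - _]hsum -sumrB; apply: eq_bigr => i _.
    by rewrite mulrBr mulr1.
  by apply: ler_sum => i _; rewrite ler_wpM2l //; case: (hF i) => _ [].
- have hp j : pred1_given P X Z f j = \sum_(i < k) beta i * pred1_given P X Z (F i) j.
    rewrite /pred1_given /f (@Rint_sum _ _ _ P _ (mZ j) _ _ beta (fun i w => F i (X w)) (fun i => iF i j)) mulr_suml.
    by apply: eq_bigr => i _; rewrite mulrA.
  apply: (@le_trans _ _ (\sum_(i < k) beta i * DP_bias P X Z (F i))); last first.
    by apply: ler_sum => i _; rewrite ler_wpM2l //; case: (hF i) => _ [].
  rewrite /DP_bias.
  under [X in _ <= X]eq_bigr do rewrite mulr_sumr.
  rewrite exchange_big /=; apply: ler_sum => j _.
  under [X in _ <= X]eq_bigr do rewrite mulr_sumr.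
  rewrite exchange_big /=; apply: ler_sum => l _.
  rewrite !hp -sumrB.
  apply: (le_trans (ler_norm_sum _ _ _)); apply: ler_sum => i _.
  by rewrite -mulrBr normrM ger0_norm.
Qed.
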